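(* Let $k\ge1$ and $n>1$ be integers. Define $k\uparrow\uparrow1=k$ and $k\uparrow\uparrow(j+1)=k^{\,k\uparrow\uparrow j}$ for $j\ge1$. Then the sequence $(k\uparrow\uparrow j)_{j\ge1}$ converges in the ring $\mathbb{Z}_n$ of $n$-adic integers.
   Context: For an integer $n>1$, $\mathbb{Z}_n=\varprojlim_m \mathbb{Z}/n^m\mathbb{Z}$ is the ring of $n$-adic integers; a sequence of integers converges in $\mathbb{Z}_n$ iff for every $m\ge1$ its residues modulo $n^m$ are eventually constant. *)

(* Defs.v *)
From mathcomp Require Import all_boot.
Set Implicit Arguments. Unset Strict Implicit. Unset Printing Implicit Defensive.

(* Tetration: tetr k j = k ↑↑ j, with tetr k 0 = 1, so that
   tetr k 1 = k and tetr k (j+1) = k ^ (tetr k j) for j >= 1. *)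
Fixpoint tetr (k j : nat) : nat :=
  match j with
  | 0 => 1
  | j'.+1 => k ^ (tetr k j')
  end.

(* A sequence of natural numbers (a j)_{j>=1} converges in Z_n iff for every
   m >= 1 its residues modulo n^m are eventually constant. *)
Definition nadic_converges (n : nat) (a : nat -> nat) : Prop :=
  forall m, 0 < m -> exists N, forall j, N <= j -> a j = a N %[mod n ^ m].

(* Main.v *)
Require Import Defs.
From mathcomp Require Import all_boot.

Lemma per_step (k M i P : nat) : k ^ i = k ^ (i + P) %[mod M] ->
  forall e, i <= e -> k ^ (e + P) = k ^ e %[mod M].
Proof.
move=> H e /subnKC <-; set d := e - i.
rewrite -addnA (addnC d) addnA expnD [k ^ (i + d)]expnD.
by rewrite -modnMml -H modnMml.
Qed.

Lemma per_mul (k M i P : nat) : k ^ i = k ^ (i + P) %[mod M] ->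
  forall e t, i <= e -> k ^ (e + t * P) = k ^ e %[mod M].
Proof.
move=> H e t He; elim: t => [|t IH]; first by rewrite mul0n addn0.
rewrite mulSn addnA [e + P]addnC -addnA addnC.
by rewrite (@per_step k M i P H) // (leq_trans He (leq_addr _ _)).
Qed.

Lemma pig (M k : nat) : 1 < M ->
  exists i P, 0 < P < M /\ k ^ i = k ^ (i + P) %[mod M].
Proof.
move=> M1; have M0 : 0 < M by apply: ltnW.
pose f := fun x : 'I_M => Ordinal (ltn_pmod (k ^ x.+1) M0).
case: (boolP (injectiveb f)) => [/injectiveP inj | /injectivePn [x [y nxy exy]]].
- pose z := invF inj (Ordinal M0).
  have := f_invF inj (Ordinal M0); rewrite -/z => /(congr1 val) /= Hz.
  exists z.+1, 1; split; first by rewrite M1.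
  by rewrite Hz addn1 expnS -modnMmr Hz muln0 mod0n.
- have Hv : k ^ x.+1 = k ^ y.+1 %[mod M] by have := congr1 val exy.
  case: (ltngtP x y) => hxy.
  + exists x.+1, (y - x); split.
      by rewrite subn_gt0 hxy /=; apply: leq_ltn_trans (leq_subr _ _) (ltn_ord y).
    by rewrite addSn subnKC // ltnW.
  + exists y.+1, (x - y); split.
      by rewrite subn_gt0 hxy /=; apply: leq_ltn_trans (leq_subr _ _) (ltn_ord x).
    by rewrite addSn subnKC // ltnW.
  + by move: nxy; rewrite (val_inj hxy) eqxx.
Qed.

Lemma tetr_ge (k j : nat) : 1 < k -> j <= tetr k j.
Proof.
move=> k1; elim: j => [|j IH] //=.
by apply: leq_trans (ltn_expl _ k1); rewrite ltnS.
Qed.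

Lemma claim (M : nat) : forall k, 0 < M -> 1 <= k ->
  exists N, forall j, N <= j -> tetr k j = tetr k N %[mod M].
Proof.
elim/ltn_ind: M => M IH k M0 k1.
case: (ltnP 1 M) => M1; last first.
  have -> : M = 1 by apply/eqP; rewrite eqn_leq M1 M0.
  by exists 0 => j _; rewrite !modn1.
case: (ltngtP k 1) => hk; first by move: k1; rewrite leqNgt hk.
2: { exists 0 => j _; subst k.
     have E : forall j, tetr 1 j = 1 by case=> //= j'; rewrite exp1n.
     by rewrite !E. }
have [i [P [/andP [P0 PM] HP]]] := @pig M k M1.
have [N0 HN0] := IH P PM k P0 k1.
exists (maxn N0 i).+1 => j Hj.
have Hj' : maxn N0 i <= j.-1 by rewrite -ltnS; case: j Hj => // j.
have Ej : tetr k j = k ^ tetr k j.-1 by case: j Hj {Hj'}.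
rewrite Ej /=.
set a := tetr k j.-1; set b := tetr k (maxn N0 i).
have ha : i <= a by apply: leq_trans (tetr_ge k j.-1 hk); apply: leq_trans (leq_maxr N0 i) Hj'.
have hb : i <= b by apply: leq_trans (tetr_ge k (maxn N0 i) hk); apply: leq_maxr.
have hab : a = b %[mod P].
  rewrite /a /b (HN0 j.-1) ?(HN0 (maxn N0 i)) //; first by apply: leq_maxl.
  by apply: leq_trans Hj'; apply: leq_maxl.
wlog le_ba : a b ha hb hab / b <= a.
  move=> W; case: (leqP b a) => h; first exact: W.
  by apply/esym; apply: W => //; apply: ltnW.
have /dvdnP [t Ht] : P %| a - b by rewrite -eqn_mod_dvd // hab.
have -> : a = b + t * P by rewrite -Ht subnKC.
exact: (@per_mul k M i P HP).
Qed.

Theorem mainTheorem4 (k n : nat) (hk : 1 <= k) (hn : 1 < n) :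
  nadic_converges n (fun j => tetr k j.+1).
Proof.
move=> m m0.
have nm : 0 < n ^ m by rewrite expn_gt0 ltnW.
have [N HN] := @claim _ k nm hk.
exists N => j Hj.
by rewrite (HN j.+1) ?(HN N.+1) // ltnW.
Qed.
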